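(* Let $(X,\mathcal{A})$ be a measurable space, $f,g\in\mathcal{F}_{[0,1]}^{(X,\mathcal{A})}$ comonotone, and $\star:[0,1]^2\to[0,1]$ continuous, non-decreasing in both arguments and bounded from below by the maximum ($a\star b\ge\max(a,b)$). Then for every monotone measure $m$ on $(X,\mathcal{A})$ with $m(X)=1$ and all $\alpha,\beta,\gamma,\lambda,\upsilon,\tau\in(0,\infty)$ with $1\le\alpha\lambda<\infty$, $0<\beta\upsilon\le1$, $0<\gamma\tau\le1$, $\lambda\ge\tau$ and $\lambda\ge\upsilon$, \[ \big[\mathbf{Su}(m,(f\star g)^{\alpha})\big]^{\lambda}\ \le\ \big[\mathbf{Su}(m,f^{\beta})\big]^{\upsilon}\star\big[\mathbf{Su}(m,g^{\gamma})\big]^{\tau}. \]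
   Context: A monotone measure on $(X,\mathcal{A})$ is $m:\mathcal{A}\to[0,\infty]$ with $m(\emptyset)=0$, $m(X)>0$, $m(A)\le m(B)$ for $A\subseteq B$. $\mathcal{F}_{[0,1]}^{(X,\mathcal{A})}$ is the set of $\mathcal{A}$-measurable $f:X\to[0,1]$. The Sugeno integral is $\mathbf{Su}(m,f)=\sup\{\min(t,m(\{f\ge t\})) : t\in(0,\infty]\}$. $f,g$ are comonotone if $(f(x)-f(y))(g(x)-g(y))\ge0$ for all $x,y$. Operations on functions are pointwise. *)

(* Defs.v *)
From HB Require Import structures.
From mathcomp Require Import all_boot all_order all_algebra.
From mathcomp Require Import all_classical all_reals all_analysis.
Set Implicit Arguments. Unset Strict Implicit. Unset Printing Implicit Defensive.
Import Order.TTheory GRing.Theory Num.Theory.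
Import numFieldNormedType.Exports.
Local Open Scope classical_set_scope.
Local Open Scope ring_scope.

Definition monotone_measure d (T : measurableType d) (R : realType)
  (m : set T -> \bar R) : Prop :=
  [/\ m set0 = 0%E,
      (0 < m setT)%E,
      (forall A, measurable A -> (0 <= m A)%E) &
      (forall A B, measurable A -> measurable B -> A `<=` B -> (m A <= m B)%E)].

Definition sugeno d (T : measurableType d) (R : realType)
  (m : set T -> \bar R) (f : T -> R) : \bar R :=
  ereal_sup [set Order.min t (m [set x | (t <= (f x)%:E)%E]) |
             t in [set t : \bar R | (0 < t)%E]].

Definition comonotone (T : Type) (R : realType) (f g : T -> R) : Prop :=
  forall x y, 0 <= (f x - f y) * (g x - g y).

Definition unit_int (R : realType) : set R := [set x | 0 <= x <= 1].

(* Main.v *)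
Require Import Defs.
From HB Require Import structures.
From mathcomp Require Import all_boot all_order all_algebra.
From mathcomp Require Import all_classical all_reals all_analysis.
Import Order.TTheory GRing.Theory Num.Theory.
Import numFieldNormedType.Exports.
Local Open Scope classical_set_scope.
Local Open Scope ring_scope.
Lemma cont_eps (R : realType) (star : R -> R -> R)
  (star_cont : {within (@unit_int R) `*` (@unit_int R),
                 continuous (fun p : R * R => star p.1 p.2)})
  (a b e : R) : 0 <= a <= 1 -> 0 <= b <= 1 -> 0 < e ->
  exists2 d : R, 0 < d & forall p q, 0 <= p <= 1 -> 0 <= q <= 1 ->
    `|a - p| < d -> `|b - q| < d -> `|star a b - star p q| < e.
Proof.
move=> ha hb he.
move/subspace_continuousP: star_cont => /(_ (a, b) (conj ha hb)).
move/cvgrPdist_lt => /(_ e he).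
rewrite near_withinE => /nbhs_ballP [d d0 Hd].
exists d => // p q hp hq hpa hqb.
by apply: (Hd (p, q)).
Qed.

Lemma dense_up (R : realType) (a d : R) : 0 <= a <= 1 -> 0 < d ->
  exists q : rat, [/\ a <= (@ratr R q) <= 1, `|a - (@ratr R q)| < d &
                      (a < (@ratr R q) \/ (@ratr R q) = 1 :> R)].
Proof.
move=> /andP[a0 a1] d0.
have [ea|a1'] := eqVneq a 1.
  exists (1 : rat); rewrite rmorph1 ea lexx subrr normr0 d0; split => //; by right.
have a1l : a < 1 by rewrite lt_neqAle a1' a1.
have aa : a < Num.min (a + d) 1 by rewrite lt_min ltrDl d0 a1l.
have [q] := rat_in_itvoo aa.
rewrite in_itv /= => /andP[aq]; rewrite lt_min => /andP[qd q1].
exists q; split.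
- by rewrite (ltW aq) (ltW q1).
- by rewrite distrC ger0_norm ?subr_ge0 ?(ltW aq) // ltrBlDl.
- by left.
Qed.

Lemma pow_le_exp (R : realType) (x p q : R) : 0 <= x <= 1 -> 0 < p -> p <= q ->
  x `^ q <= x `^ p.
Proof.
move=> /andP[x0 x1] p0 pq.
have [->|xpos] := eqVneq x 0.
  by rewrite !powR0 // gt_eqF // (lt_le_trans p0 pq).
by apply: ger_powR => //; rewrite x1 andbT lt_neqAle eq_sym xpos x0.
Qed.

Lemma pow01 (R : realType) (x p : R) : 0 <= x <= 1 -> 0 <= p -> 0 <= x `^ p <= 1.
Proof.
move=> /andP[x0 x1] p0; rewrite powR_ge0 /=.
have := @ge0_ler_powR R p p0 x 1; rewrite powR1; apply => //; by rewrite nnegrE.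
Qed.

Section meas.
Context d (T : measurableType d) (R : realType).

Lemma lvl_le (phi : T -> R) : measurable_fun setT phi -> forall r,
  measurable [set x | phi x <= r].
Proof.
move=> mp r.
rewrite (_ : [set x | phi x <= r] = setT `&` phi @^-1` `]-oo, r]).
  exact: mp.
by apply/seteqP; split => x /=; rewrite in_itv /=; [move=> h; split|case].
Qed.

Lemma lvl_gt (phi : T -> R) : measurable_fun setT phi -> forall r,
  measurable [set x | r < phi x].
Proof.
move=> mp r.
rewrite (_ : [set x | r < phi x] = setT `&` phi @^-1` `]r, +oo[).
  exact: mp.
by apply/seteqP; split => x /=; rewrite in_itv /= andbT; [move=> h; split|case].
Qed.

Lemma lvl_ge (phi : T -> R) : measurable_fun setT phi -> forall r,
  measurable [set x | (r%:E <= (phi x)%:E)%E].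
Proof.
move=> mp r.
rewrite (_ : [set x | _] = setT `&` phi @^-1` `[r, +oo[).
  exact: mp.
by apply/seteqP; split => x /=; rewrite in_itv /= andbT lee_fin; [move=> h; split|case].
Qed.

Variable m : set T -> \bar R.
Hypothesis m0 : m set0 = 0%E.

Lemma su_ge0 (phi : T -> R) : (0 <= sugeno m phi)%E.
Proof.
apply: (@le_trans _ _ (Order.min +oo%E (m [set x | (+oo <= (phi x)%:E)%E]))).
  rewrite (_ : [set x | _] = set0) ?m0.
    by rewrite le_min leey lexx.
  by apply/seteqP; split => x //=; rewrite leNgt ltey.
apply: ereal_sup_ubound.

exists +oo%E => //=.
Qed.

Lemma su_le (phi : T -> R) (c : R) : 0 <= c -> (forall x, phi x <= 1) ->
  (forall r, 0 < r -> c < r -> r <= 1 ->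
     (m [set x | (r%:E <= (phi x)%:E)%E] <= c%:E)%E) ->
  (sugeno m phi <= c%:E)%E.
Proof.
move=> c0 h1 H; apply: ge_ereal_sup => _ [t t0 <-].
case: t t0 => [r| |] /=.
- rewrite lte_fin => r0.
  have [rc|cr] := leP r c; first by rewrite ge_min lee_fin rc.
  have [r1|r1] := leP r 1; first by rewrite ge_min (H r r0 cr r1) orbT.
  rewrite (_ : [set x | _] = set0) ?m0 ?ge_min ?lee_fin ?c0 ?orbT //.
  apply/seteqP; split => x //=; rewrite lee_fin => hx.
  by move: (le_lt_trans (le_trans hx (h1 x)) r1); rewrite ltxx.
- move=> _; rewrite (_ : [set x | _] = set0) ?m0 ?ge_min ?lee_fin ?c0 ?orbT //.
  by apply/seteqP; split => x //=; rewrite leNgt ltey.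
- by rewrite ltNge leNye.
Qed.

Lemma su_fin (phi : T -> R) : (forall x, 0 <= phi x <= 1) ->
  exists A, sugeno m phi = A%:E /\ 0 <= A <= 1.
Proof.
move=> h01.
have h1 : (sugeno m phi <= 1%:E)%E.
  apply: su_le => // [x|r r0 r1 r1']; first by case/andP: (h01 x).
  by move: (lt_le_trans r1 r1'); rewrite ltxx.
move: (su_ge0 phi) h1; case: (sugeno m phi) => [r| |] //=.
- by rewrite !lee_fin => r0 r1; exists r; rewrite r0 r1.
Qed.

Lemma meas_star (f g : T -> R) (mf : measurable_fun setT f) (mg : measurable_fun setT g)
  (f01 : forall x, 0 <= f x <= 1) (g01 : forall x, 0 <= g x <= 1)
  (star : R -> R -> R)
  (star01 : forall a b : R, 0 <= a <= 1 -> 0 <= b <= 1 -> 0 <= star a b <= 1)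
  (star_cont : {within (@unit_int R) `*` (@unit_int R),
                 continuous (fun p : R * R => star p.1 p.2)})
  (star_mono : forall a a' b b' : R, 0 <= a <= 1 -> 0 <= a' <= 1 ->
       0 <= b <= 1 -> 0 <= b' <= 1 ->
       a <= a' -> b <= b' -> star a b <= star a' b') :
  measurable_fun setT (fun x => star (f x) (g x)).
Proof.
apply: (measurability _ (measurable_realfun.RGenCInfty.measurableE R)).
move=> _ [_ [u ->] <-].
pose cond (q q' : rat) := (0 <= @ratr R q <= 1) && (0 <= @ratr R q' <= 1) &&
   (star (ratr q) (ratr q') < u).
pose P (q q' : rat) := if cond q q' then
   [set y | f y <= ratr q] `&` [set y | g y <= ratr q'] else set0.
rewrite (_ : _ `&` _ = ~` \bigcup_q \bigcup_q' P q q').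
  apply: measurableC; apply: bigcupT_measurable_rat => q.
  apply: bigcupT_measurable_rat => q'.
  rewrite /P; case: ifP => _; last exact: measurable0.
  by apply: measurableI; apply: lvl_le.
apply/seteqP; split => y /=.
- case=> _; rewrite in_itv /= andbT => hu [q _ [q' _]].
  rewrite /P; case: ifP => // /andP[/andP[hq hq'] hs] [/= hf hg].
  have := star_mono _ _ _ _ (f01 y) hq (g01 y) hq' hf hg.
  by move=> /le_lt_trans /(_ hs); rewrite ltNge hu.
- move=> hy; split => //; rewrite in_itv /= andbT leNgt; apply/negP => hlt.
  apply: hy.
  have e0 : 0 < u - star (f y) (g y) by rewrite subr_gt0.
  have [dl dl0 Hd] := @cont_eps R star star_cont _ _ _ (f01 y) (g01 y) e0.
  have [q [hq hqd _]] := @dense_up R _ _ (f01 y) dl0.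
  have [q' [hq' hqd' _]] := @dense_up R _ _ (g01 y) dl0.
  have hq0 : 0 <= @ratr R q <= 1.
    by case/andP: hq (f01 y) => h1 h2 /andP[h3 _]; rewrite h2 (le_trans h3 h1).
  have hq0' : 0 <= @ratr R q' <= 1.
    by case/andP: hq' (g01 y) => h1 h2 /andP[h3 _]; rewrite h2 (le_trans h3 h1).
  exists q => //; exists q' => //.
  have hs : star (ratr q) (ratr q') < u.
    move: (Hd _ _ hq0 hq0' hqd hqd'); rewrite ltr_distlC => /andP[_].
    by rewrite addrC subrK.
  rewrite /P /cond hq0 hq0' hs /=.
  by split => /=; [case/andP: hq|case/andP: hq'].
Qed.
End meas.
Arguments lvl_le {d T R}.
Arguments lvl_gt {d T R}.
Arguments lvl_ge {d T R}.
Arguments su_ge0 {d T R m}.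
Arguments su_le {d T R m}.
Arguments su_fin {d T R m}.
Arguments meas_star {d T R}.

Theorem corollary4p5 (d : measure_display) (T : measurableType d) (R : realType)
  (f g : T -> R)
  (mf : measurable_fun setT f) (mg : measurable_fun setT g)
  (f01 : forall x, 0 <= f x <= 1) (g01 : forall x, 0 <= g x <= 1)
  (cfg : comonotone f g)
  (star : R -> R -> R)
  (star01 : forall a b : R, 0 <= a <= 1 -> 0 <= b <= 1 -> 0 <= star a b <= 1)
  (star_cont : {within (@unit_int R) `*` (@unit_int R),
                 continuous (fun p : R * R => star p.1 p.2)})
  (star_mono : forall a a' b b' : R, 0 <= a <= 1 -> 0 <= a' <= 1 ->
       0 <= b <= 1 -> 0 <= b' <= 1 ->
       a <= a' -> b <= b' -> star a b <= star a' b')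
  (star_max : forall a b : R, 0 <= a <= 1 -> 0 <= b <= 1 ->
       Num.max a b <= star a b) :
  forall (m : set T -> \bar R), monotone_measure m -> m setT = 1%E ->
  forall alpha beta gamma lambda upsilon tau : R,
    0 < alpha -> 0 < beta -> 0 < gamma -> 0 < lambda -> 0 < upsilon -> 0 < tau ->
    1 <= alpha * lambda -> beta * upsilon <= 1 -> gamma * tau <= 1 ->
    tau <= lambda -> upsilon <= lambda ->
    (fine (sugeno m (fun x => (star (f x) (g x)) `^ alpha))) `^ lambda
    <= star ((fine (sugeno m (fun x => f x `^ beta))) `^ upsilon)
            ((fine (sugeno m (fun x => g x `^ gamma))) `^ tau).
Proof.
move=> m [m0 mX0 mge mle] mX1 al be ga la up ta al0 be0 ga0 la0 up0 ta0
  alla beup gata tala upla.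
have mh := meas_star f g mf mg f01 g01 star star01 star_cont star_mono.
have h01 x : 0 <= star (f x) (g x) <= 1 by apply: star01.
have fb01 x : 0 <= f x `^ be <= 1 by apply: pow01 => //; exact: ltW.
have gc01 x : 0 <= g x `^ ga <= 1 by apply: pow01 => //; exact: ltW.
have ha01 x : 0 <= star (f x) (g x) `^ al <= 1 by apply: pow01 => //; exact: ltW.
have [A [HA A01]] := su_fin m0 _ fb01.
have [B [HB B01]] := su_fin m0 _ gc01.
have [C [HC C01]] := su_fin m0 _ ha01.
rewrite HA HB HC /=.
pose a := A `^ up; pose b := B `^ ta.
have a01 : 0 <= a <= 1 by apply: pow01 => //; exact: ltW.
have b01 : 0 <= b <= 1 by apply: pow01 => //; exact: ltW.
pose w := star a b.
have w01 : 0 <= w <= 1 by apply: star01.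
pose c := w `^ la^-1.
have c0 : 0 <= c by apply: powR_ge0.
have wc : w = c `^ la.
  by rewrite /c -powRrM mulVf ?gt_eqF // powRr1 //; case/andP: w01.
have lai0 : 0 <= la^-1 by rewrite invr_ge0 ltW.
have Xc (X p : R) : 0 <= X <= 1 -> 0 < p -> p <= la -> X `^ p <= w -> X <= c.
  move=> X01 p0 pla Xw.
  apply: (@le_trans _ _ (X `^ (p / la))).
    rewrite -{1}(@powRr1 _ X); last by case/andP: X01.
    apply: pow_le_exp => //; first by rewrite divr_gt0.
    by rewrite ler_pdivrMr // mul1r.
  rewrite powRrM; apply: ge0_ler_powR => //; rewrite ?nnegrE ?powR_ge0 //.
  by case/andP: w01.
have Ac : A <= c.
  apply: (Xc A up) => //; apply: (le_trans _ (star_max _ _ a01 b01)).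
  by rewrite le_max lexx.
have Bc : B <= c.
  apply: (Xc B ta) => //; apply: (le_trans _ (star_max _ _ a01 b01)).
  by rewrite le_max lexx orbT.
have Cc : C <= c.
  have : (sugeno m (fun x => (star (f x) (g x) `^ al)%R) <= c%:E)%E.
    apply: su_le => // [x|r r0 cr r1]; first by case/andP: (ha01 x).
    have r01 : 0 <= r <= 1 by rewrite (ltW r0) r1.
    pose u := r `^ al^-1.
    have u01 : 0 <= u <= 1 by apply: pow01 => //; rewrite invr_ge0 ltW.
    have ru : r `^ la <= u.
      apply: pow_le_exp => //; first by rewrite invr_gt0.
      by rewrite -(ler_pM2l al0) mulfV ?gt_eqF.
    have wu : w < u.
      apply: lt_le_trans ru; rewrite wc.
      by apply: gt0_ltr_powR; rewrite ?nnegrE // ltW.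
    have Esub : [set x | (r%:E <= (star (f x) (g x) `^ al)%:E)%E]
                `<=` [set x | u <= star (f x) (g x)].
      move=> x /=; rewrite lee_fin => hx.
      have := @ge0_ler_powR R al^-1 _ r (star (f x) (g x) `^ al).
      rewrite -powRrM mulfV ?gt_eqF // powRr1; last by case/andP: (h01 x).
      apply; rewrite ?nnegrE ?powR_ge0 ?invr_ge0 ?(ltW r0) ?(ltW al0) //.
    have mE : measurable [set x | (r%:E <= (star (f x) (g x) `^ al)%:E)%E].
      apply: lvl_ge; exact: (measurableT_comp (measurable_realfun.measurable_powR al) mh).
    have e0 : 0 < u - w by rewrite subr_gt0.
    have [dl dl0 Hd] := @cont_eps R star star_cont _ _ _ a01 b01 e0.
    have [q [hq hqd hqa]] := @dense_up R _ _ a01 dl0.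
    have [q' [hq' hqd' hqb]] := @dense_up R _ _ b01 dl0.
    pose a' := @ratr R q; pose b' := @ratr R q'.
    have a'01 : 0 <= a' <= 1.
      by case/andP: hq a01 => h1 h2 /andP[h3 _]; rewrite h2 (le_trans h3 h1).
    have b'01 : 0 <= b' <= 1.
      by case/andP: hq' b01 => h1 h2 /andP[h3 _]; rewrite h2 (le_trans h3 h1).
    have hs : star a' b' < u.
      move: (Hd _ _ a'01 b'01 hqd hqd'); rewrite ltr_distlC => /andP[_].
      by rewrite addrC subrK.
    pose F := [set x | a' < f x]; pose G := [set x | b' < g x].
    have mF : measurable F by apply: lvl_gt.
    have mG : measurable G by apply: lvl_gt.
    have EFG : [set x | (r%:E <= (star (f x) (g x) `^ al)%:E)%E] `<=` F `|` G.
      move=> x /Esub /= hx.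
      have [fx|hfx] := ltP a' (f x); first by left.
      have [gx|hgx] := ltP b' (g x); first by right.
      have := star_mono _ _ _ _ (f01 x) a'01 (g01 x) b'01 hfx hgx.
      by move=> /le_lt_trans /(_ hs); rewrite ltNge hx.
    have nest : F `<=` G \/ G `<=` F.
      have [FG|nFG] := pselect (F `<=` G); first by left.
      right => y Gy; rewrite /F /= ltNge; apply/negP => fy; apply: nFG => x Fx.
      rewrite /G /= ltNge; apply/negP => gx.
      have h1 : 0 < f x - f y by rewrite subr_gt0 (le_lt_trans fy Fx).
      have h2 : g x - g y < 0 by rewrite subr_lt0 (le_lt_trans gx Gy).
      by move: (cfg x y); rewrite leNgt (pmulr_rlt0 _ h1) h2.
    have mbound (h : T -> R) (mh' : measurable_fun setT h) (h01' : forall x, 0 <= h x <= 1)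
        (e X x0 x1 : R) (HS : sugeno m (fun x => (h x `^ e)%R) = X%:E)
        (X01 : 0 <= X <= 1) (e0' : 0 < e) (pe : 0 < x0) (ex0 : e <= x0^-1)
        (x1' : 0 <= x1 <= 1) (Xx1 : X `^ x0 = x1)
        (a'' : R) (a''01 : 0 <= a'' <= 1) (ha : x1 < a'' \/ a'' = 1) :
        (m [set x | (a'' < h x)%R] <= X%:E)%E.
      case: ha => [aa'|a'1]; last first.
        rewrite (_ : [set x | (a'' < h x)%R] = set0) ?m0 ?lee_fin; first by case/andP: X01.
        apply/seteqP; split => x //=; rewrite a'1 => hx.
        by move: (h01' x) => /andP[_]; rewrite leNgt hx.
      pose s := a'' `^ e.
      have a''0 : 0 < a'' by apply: le_lt_trans aa'; case/andP: x1'.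
      have sA : X < s.
        apply: (@lt_le_trans _ _ (a'' `^ x0^-1)).
          rewrite -(@powRr1 _ X); last by case/andP: X01.
          rewrite -(@mulfV _ x0) ?gt_eqF // powRrM Xx1.
          apply: gt0_ltr_powR; rewrite ?invr_gt0 ?nnegrE ?(ltW a''0) //; by case/andP: x1'.
        by rewrite /s; apply: pow_le_exp.
      have Hmin : (Order.min s%:E (m [set x | (s%:E <= (h x `^ e)%:E)%E]) <= X%:E)%E.
        rewrite -HS; apply: ereal_sup_ubound; exists s%:E => //=.
        by rewrite lte_fin powR_gt0.
      move: Hmin; rewrite ge_min lee_fin (leNgt s X) sA /= => Hm.
      apply: le_trans Hm; apply: mle => //.
        by apply: lvl_gt.
        by apply: lvl_ge; exact: (measurableT_comp (measurable_realfun.measurable_powR e) mh').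
      move=> x /= hx; rewrite lee_fin.
      by apply: ge0_ler_powR; rewrite ?nnegrE ?(ltW e0') ?(ltW a''0) ?(ltW hx) //;
        case/andP: (h01' x).
    have mFc : (m F <= c%:E)%E.
      apply: (le_trans (mbound f mf f01 be A up a HA A01 be0 up0 _ a01 erefl a' a'01 hqa)).
        by rewrite -(ler_pM2r up0) mulVf ?gt_eqF.
      by rewrite lee_fin.
    have mGc : (m G <= c%:E)%E.
      apply: (le_trans (mbound g mg g01 ga B ta b HB B01 ga0 ta0 _ b01 erefl b' b'01 hqb)).
        by rewrite -(ler_pM2r ta0) mulVf ?gt_eqF.
      by rewrite lee_fin.
    case: nest => [FG|GF].
    - apply: le_trans mGc; apply: mle => // x /EFG [/FG|] //.
    - apply: le_trans mFc; apply: mle => // x /EFG [|/GF] //.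
  by rewrite HC lee_fin.
rewrite -/a -/b -/w wc; apply: ge0_ler_powR; rewrite ?nnegrE //; first exact: ltW.
by case/andP: C01.
Qed.
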